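(* Let $q$ be a prime power, $M\geq 2$ an integer, and let $f=gg^*\in\mathbb{F}_q[x]$ be a type $2$ polynomial of degree $2n$, where $g$ is monic irreducible of degree $n$ with $g(0)\neq 0$ and $g\neq g^*$. Let $C_f\in\mathrm{Sp}(2n,q)$ be an element with characteristic polynomial $f$. Then the equation $\alpha^M=C_f$ has a solution $\alpha\in\mathrm{Sp}(2n,q)$ if and only if $g$ is an $M$-power polynomial.
   Context: For a monic polynomial $f$ of degree $r$ with $f(0)\neq0$, $f^*(x)=f(0)^{-1}x^rf(x^{-1})$. $\mathrm{Sp}(2n,q)$ is the group of $2n\times 2n$ matrices over $\mathbb{F}_q$ preserving a non-degenerate alternating bilinear form. A monic irreducible polynomial $g\in\mathbb{F}_q[x]$, $g\neq x$, of degree $k\geq1$ is an $M$-power polynomial if $g(x^M)$ has a monic irreducible factor of degree $k$. *)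

(* Defs.v *)
From mathcomp Require Import all_boot all_order all_algebra all_field.
Set Implicit Arguments. Unset Strict Implicit. Unset Printing Implicit Defensive.
Import GRing.Theory.
Local Open Scope ring_scope.

(* f^*(x) = f(0)^{-1} x^r f(1/x), r = deg f: coefficients reversed, scaled. *)
Definition poly_star (F : fieldType) (f : {poly F}) : {poly F} :=
  (f`_0)^-1 *: Poly (rev (polyseq f)).

Definition nondeg_alternating (F : fieldType) (m : nat) (B : 'M[F]_m) : Prop :=
  B^T = - B /\ (forall i, B i i = 0) /\ B \in unitmx.

Definition in_Sp (F : fieldType) (m : nat) (B : 'M[F]_m) (A : 'M[F]_m) : Prop :=
  A \in unitmx /\ A^T *m B *m A = B.

Definition M_power_poly (F : fieldType) (M : nat) (g : {poly F}) : Prop :=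
  [/\ g \is monic, irreducible_poly g, g != 'X &
    exists h : {poly F}, [/\ h \is monic, irreducible_poly h,
       h %| g \Po 'X^M & size h = size g]].

(* Main.v *)
Require Import Defs.
From mathcomp Require Import all_boot all_order all_algebra all_field.
From mathcomp Require Import zify ring.
From Stdlib Require Import Classical.
Import GRing.Theory.
Local Open Scope ring_scope.

Set Implicit Arguments. Unset Strict Implicit. Unset Printing Implicit Defensive.

Section Kry.
Variables (F : fieldType) (m : nat) (A : 'M[F]_m.+1).
Local Notation phi := (horner_mx A).

Definition krylov (v : 'rV[F]_m.+1) d : 'M_(d, m.+1) := \matrix_(i < d) (v *m A ^+ i).

Lemma horner_mx_rVpoly d (c : 'rV[F]_d) :
  phi (rVpoly c) = \sum_(i < d) c 0 i *: A ^+ i.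
Proof.
rewrite horner_rVpoly mulmx_sum_row linear_sum; apply: eq_bigr => i _.
by rewrite linearZ rowK /=; congr (_ *: _); apply: mxvecK.
Qed.

Lemma krylov_mul v d (c : 'rV_d) : c *m krylov v d = v *m phi (rVpoly c).
Proof.
rewrite horner_mx_rVpoly mulmx_sum_row mulmx_sumr; apply: eq_bigr => i _.
by rewrite rowK scalemxAr.
Qed.

Lemma phi_comm p q : phi p * phi q = phi q * phi p.
Proof. exact: comm_horner_mx2. Qed.

Lemma coprime_kill P Q (v : 'rV_m.+1) : coprimep P Q -> v *m phi P = 0 -> v *m phi Q = 0 -> v = 0.
Proof.
move=> /Bezout_coprimepP [[u w] /=]; rewrite -size_poly_eq1 => /eqP s1 vP vQ.
have [c cE] : exists c, u * P + w * Q = c%:P.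
  by exists (u * P + w * Q)`_0; rewrite [LHS]size1_polyC ?s1.
have c0 : c != 0 by apply/eqP => c0; move: s1; rewrite cE c0 size_poly0.
have : v *m phi (u * P + w * Q) = 0.
  rewrite rmorphD /= !rmorphM /= mulmxDr -!/(_ * _).
  by rewrite [phi u * _]phi_comm [phi w * _]phi_comm !mulmxA vP vQ !mul0mx addr0.
rewrite cE horner_mx_C mul_mx_scalar => /eqP; rewrite scalemx_eq0 (negPf c0) /=.
by move/eqP.
Qed.

Lemma irred_coprime (P r : {poly F}) : irreducible_poly P -> r != 0 -> (size r < size P)%N -> coprimep P r.
Proof.
move=> [sP irrP] r0 sr.
have [/eqP g1|g1] := eqVneq (size (gcdp P r)) 1%N.
  by rewrite /coprimep g1.
have := irrP _ g1 (dvdp_gcdl P r) => eqg.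
have : P %| r by rewrite -(eqp_dvdl _ eqg) dvdp_gcdr.
move/dvdp_leq => /(_ r0); rewrite leqNgt sr //.
Qed.

Lemma krylov_free P (v : 'rV_m.+1) : irreducible_poly P -> v != 0 -> v *m phi P = 0 ->
  row_free (krylov v (size P).-1).
Proof.
move=> irrP v0 vP; rewrite -kermx_eq0; apply/eqP/row_matrixP => i.
rewrite row0.
set c := row i _.
have : c *m krylov v (size P).-1 = 0 by rewrite /c -row_mul mulmx_ker row0.
rewrite krylov_mul => vc.
have [r0|r0] := eqVneq (rVpoly c) 0.
  by rewrite -[c]rVpolyK r0 linear0.
have sr : (size (rVpoly c) < size P)%N.
  have := size_poly (size P).-1 (fun k => if insub k is Some i then c 0 i else 0).
  rewrite /rVpoly => h; apply: (leq_ltn_trans h).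
  by case: irrP => sP _; rewrite prednK // ltnW.
have := coprime_kill (irred_coprime irrP r0 sr) vP vc.
by move/eqP; rewrite (negPf v0).
Qed.

Lemma krylov_span P (v : 'rV_m.+1) r : P != 0 -> v *m phi P = 0 ->
  (v *m phi r <= krylov v (size P).-1)%MS.
Proof.
move=> P0 vP; rewrite (divp_eq r P) rmorphD rmorphM /= mulmxDr.
rewrite -/(_ * _) phi_comm mulmxA vP mul0mx add0r.
rewrite -(poly_rV_K (p := r %% P) (d := (size P).-1)) -?krylov_mul ?submxMl //.
by rewrite -ltnS prednK ?ltn_modp // size_poly_gt0.
Qed.

End Kry.

Section Aux.
Variables (F : fieldType) (m : nat).
Implicit Types (A Y : 'M[F]_m.+1) (p : {poly F}).

Lemma horner_mx_tr A p : (horner_mx A p)^T = horner_mx A^T p.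
Proof.
elim/poly_ind: p => [|p c IH]; first by rewrite !rmorph0 trmx0.
rewrite !(rmorphD, rmorphM) /= !(horner_mx_X, horner_mx_C) linearD /= -IH.
rewrite tr_scalar_mx; congr (_ + _).
change ((horner_mx A p *m A)^T = (horner_mx A p)^T *m A^T).
rewrite trmx_mul IH; exact: (comm_mx_horner _ (comm_mx_refl _)).
Qed.

Lemma horner_mx_wide A p N : (size p <= N)%N ->
  horner_mx A p = \sum_(i < N) p`_i *: A ^+ i.
Proof.
move=> sp.
rewrite {1}(_ : p = \sum_(i < N) p`_i *: 'X^i).
  rewrite linear_sum; apply: eq_bigr => i _.
  by rewrite linearZ rmorphXn /= horner_mx_X.
rewrite -poly_def; apply/polyP => i; rewrite coef_poly.
by case: ltnP => // h; rewrite nth_default // (leq_trans sp h).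
Qed.

Lemma horner_rev Y (g : {poly F}) n : Y \in unitmx -> size g = n.+1 ->
  horner_mx Y (Poly (rev g)) = Y ^+ n * horner_mx (invmx Y) g.
Proof.
move=> Yu sg.
rewrite (horner_mx_wide _ (N := n.+1)); last by rewrite -sg -(size_rev g) size_Poly.
rewrite (horner_mx_wide _ (N := n.+1)) ?sg // mulr_sumr.
rewrite (reindex_inj rev_ord_inj); apply: eq_bigr => i _ /=.
rewrite coef_Poly subSS.
have -> : (rev g)`_(n - i) = g`_i.
  rewrite (@nth_rev _ 0 (n - i) g); last by rewrite sg ltnS leq_subr.
  by rewrite sg subSS subKn // -ltnS.
rewrite -scalerAr; congr (_ *: _).
have Yiu : Y ^+ i \is a GRing.unit by rewrite unitrX.
have ein : n = (n - i + i)%N by rewrite subnK // -ltnS.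
rewrite [in Y ^+ n]ein exprD.
change (invmx Y) with (Y^-1); rewrite exprVn mulrK //.
Qed.

Lemma horner_mx_comp A p q : horner_mx A (p \Po q) = horner_mx (horner_mx A q) p.
Proof.
elim/poly_ind: p => [|p c IH]; first by rewrite comp_poly0 !rmorph0.
rewrite comp_polyD comp_polyM comp_polyX comp_polyC !(rmorphD, rmorphM) /= IH.
by rewrite !horner_mx_C horner_mx_X.
Qed.

Lemma rank_unitl (U X : 'M[F]_m.+1) : U \in unitmx -> \rank (U *m X) = \rank X.
Proof.
by move=> Uu; rewrite -mxrank_tr trmx_mul mxrankMfree ?row_free_unit ?unitmx_tr // mxrank_tr.
Qed.

Lemma rank_unitr (U X : 'M[F]_m.+1) : U \in unitmx -> \rank (X *m U) = \rank X.
Proof. by move=> Uu; rewrite mxrankMfree ?row_free_unit. Qed.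

Lemma irred_scale (a : F) (h : {poly F}) : a != 0 -> irreducible_poly h ->
  irreducible_poly (a *: h).
Proof.
move=> a0 [sh ih]; split; first by rewrite size_scale.
move=> q sq; rewrite dvdpZr // => qh.
apply: (eqp_trans (ih q sq qh)); by rewrite eqp_sym eqp_scale.
Qed.

Lemma exists_irred_sing (A : 'M[F]_m.+1) (G : {poly F}) :
  ~~ (horner_mx A G \in unitmx) -> G != 0 ->
  exists h, [/\ irreducible_poly h, h %| G & ~~ (horner_mx A h \in unitmx)].
Proof.
move=> GA G0.
suff H : forall s (P : {poly F}), (size P <= s)%N -> P %| G -> ~~ (horner_mx A P \in unitmx) ->
  exists h, [/\ irreducible_poly h, h %| G & ~~ (horner_mx A h \in unitmx)].
  exact: (H _ G (leqnn _) (dvdpp G) GA).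
elim=> [|s IH] P sP PG Ps.
  by move: sP; rewrite leqn0 size_poly_eq0 => /eqP P0; move: PG; rewrite P0 dvd0p (negPf G0).
have P0 : P != 0 by apply: contraNneq G0 => P0; move: PG; rewrite P0 dvd0p.
have sP1 : (1 < size P)%N.
  rewrite ltnNge; apply/negP => sP1.
  have [a Pa] : exists a, P = a%:P by exists P`_0; apply: size1_polyC.
  have a0 : a != 0 by apply: contraNneq P0 => a0; rewrite Pa a0.
  move: Ps; rewrite Pa horner_mx_C unitmxE det_scalar unitfE expf_neq0 //.
have [Pirr|Pn] := classic (irreducible_poly P); first by exists P.
have [q [sq qP nqP]] : exists q : {poly F}, [/\ size q != 1%N, q %| P & ~~ (q %= P)].
  apply: NNPP => hn; apply: Pn; split => // q sq qP.
  case E: (q %= P) => //; exfalso; apply: hn; exists q; by rewrite E.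
have q0 : q != 0 by apply: contraNneq P0 => q0; move: qP; rewrite q0 dvd0p.
have sqP : (size q < size P)%N.
  rewrite ltn_neqAle dvdp_leq // andbT; move: nqP; rewrite -dvdp_size_eqp //.
have sq1 : (1 < size q)%N.
  by move: sq; rewrite ltn_neqAle eq_sym => -> /=; rewrite size_poly_gt0.
have Pe := divpK qP.
set r := P %/ q in Pe.
have r0 : r != 0 by apply: contraNneq P0 => r0; rewrite -Pe r0 mul0r.
move: Ps; rewrite -Pe rmorphM /= -[_ * _]/(_ *m _) unitmx_mul negb_and => /orP [rs|qs].
  have srP : (size r < size P)%N.
    rewrite -Pe size_mul //; move: sq1; case: (size q) => [|[|k]] //= _.
    by rewrite !addnS /= ltnS leq_addr.
  apply: (IH r); [ by rewrite -ltnS (leq_trans srP) | | by [] ].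
  by apply: dvdp_trans PG; rewrite -Pe dvdp_mulIl.
apply: (IH q); [ by rewrite -ltnS (leq_trans sqP) | | by [] ].
exact: dvdp_trans PG.
Qed.

Lemma irred_coprime2 (P r : {poly F}) : irreducible_poly P -> ~~ (P %| r) -> coprimep P r.
Proof.
move=> [sP irrP] nPr.
have [/eqP g1|g1] := eqVneq (size (gcdp P r)) 1%N; first by rewrite /coprimep g1.
have eqg := irrP _ g1 (dvdp_gcdl P r).
by move: nPr; rewrite -(eqp_dvdl _ eqg) dvdp_gcdr.
Qed.

Lemma root_from_h (h g : {poly F}) M n (A : 'M[F]_m.+1) :
  irreducible_poly h -> size h = n.+1 -> irreducible_poly g -> size g = n.+1 ->
  h %| g \Po 'X^M -> horner_mx A h = 0 -> exists p, g %| p ^+ M - 'X.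
Proof.
move=> hirr sh girr sg hG hA.
pose v : 'rV[F]_m.+1 := delta_mx 0 0.
have v0 : v != 0.
  by apply/eqP => /matrixP /(_ 0 0); rewrite !mxE eqxx /= => /eqP; rewrite oner_eq0.
have vh : v *m horner_mx A h = 0 by rewrite hA mulmx0.
have h0 := irredp_neq0 hirr.
have comm p q : horner_mx A p *m horner_mx A q = horner_mx A q *m horner_mx A p.
  by apply: phi_comm.
pose Y := horner_mx A 'X^M.
have YE p : horner_mx Y p = horner_mx A (p \Po 'X^M) by rewrite horner_mx_comp.
have vg : v *m horner_mx Y g = 0.
  by rewrite YE -(divpK hG) rmorphM /= -[_ * _]/(_ *m _) comm mulmxA vh mul0mx.
have KA := krylov_free hirr v0 vh.
have KY := krylov_free girr v0 vg.
have sub : (krylov Y v (size g).-1 <= krylov A v (size h).-1)%MS.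
  apply/row_subP => j; rewrite rowK /Y -rmorphXn.
  exact: krylov_span.
have sub2 : (krylov A v (size h).-1 <= krylov Y v (size g).-1)%MS.
  by rewrite -(mxrank_leqif_sup sub).2 (eqP KA) (eqP KY) sh sg.
have vA : (v *m horner_mx A 'X <= krylov Y v (size g).-1)%MS.
  apply: submx_trans sub2.
  exact: krylov_span.
have [c vc] := submxP vA.
rewrite krylov_mul YE in vc.
set P := (rVpoly c \Po 'X^M) in vc.
have pow k : v *m horner_mx A (P ^+ k) = v *m horner_mx A ('X ^+ k).
  elim: k => [|k IH]; first by rewrite !expr0.
  rewrite exprSr [in RHS]exprSr !rmorphM /= -[_ * _]/(_ *m _) -[horner_mx A ('X^k) * _]/(_ *m _).
  rewrite comm mulmxA -vc -!mulmxA [horner_mx A 'X *m horner_mx A (P ^+ k)]comm mulmxA IH -mulmxA comm //.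
exists (rVpoly c).
case: (boolP (g %| _)) => // ng.
have cop := irred_coprime2 girr ng.
have vk : v *m horner_mx Y (rVpoly c ^+ M - 'X) = 0.
  rewrite YE comp_polyB comp_polyX.
  have -> : (rVpoly c ^+ M) \Po 'X^M = P ^+ M by rewrite rmorphXn.
  by rewrite rmorphB /= mulmxBr pow subrr.
by move: v0; rewrite (coprime_kill cop vg vk) eqxx.
Qed.

End Aux.

Lemma bezout1 (F : fieldType) (P Q : {poly F}) : coprimep P Q ->
  exists u w, u * P + w * Q = 1.
Proof.
move=> /Bezout_coprimepP [[u w] /=]; rewrite -size_poly_eq1 => /eqP s1.
have [c cE] : exists c, u * P + w * Q = c%:P.
  by exists (u * P + w * Q)`_0; rewrite [LHS]size1_polyC ?s1.
have c0 : c != 0 by apply/eqP => c0; move: s1; rewrite cE c0 size_poly0.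
exists (c^-1 *: u), (c^-1 *: w).
by rewrite -!scalerAl -scalerDr cE -mul_polyC -polyCM mulVf.
Qed.

Section Main.
Variables (F : fieldType) (m n : nat) (g : {poly F}) (B Cf : 'M[F]_m.+1).
Hypotheses (hmn : m.+1 = (n + n)%N) (hB : B^T = -B) (hBu : B \in unitmx)
  (hCu : Cf \in unitmx) (hSp : Cf^T *m B *m Cf = B) (sg : size g = n.+1)
  (g0 : g`_0 != 0) (gmon : g \is monic) (girr : irreducible_poly g)
  (gne : g != poly_star g) (hchar : char_poly Cf = g * poly_star g).

Local Notation phi := (horner_mx Cf).
Local Notation Ci := (invmx Cf).
Local Notation psi := (horner_mx Ci).
Local Notation gs := (poly_star g).
Local Notation c := (g`_0)^-1.

Lemma sharpC : invmx B *m Cf^T *m B = Ci.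
Proof.
rewrite -[LHS](mulmxK hCu).
have -> : invmx B *m Cf^T *m B *m Cf = invmx B *m (Cf^T *m B *m Cf) by rewrite !mulmxA.
by rewrite hSp mulVmx // mul1mx.
Qed.

Lemma psiE p : psi p = invmx B *m (phi p)^T *m B.
Proof. by rewrite -sharpC horner_mx_uconjC ?horner_mx_tr. Qed.

Lemma phi_f : phi (g * gs) = 0.
Proof. by rewrite -hchar Cayley_Hamilton. Qed.

Lemma phi_gs : phi gs = c *: (Cf ^+ n * psi g).
Proof. by rewrite /poly_star linearZ /= (horner_rev hCu sg). Qed.

Lemma Ciu : Ci \in unitmx.
Proof. by rewrite unitmx_inv. Qed.

Lemma psi_gs : psi gs = c *: (Ci ^+ n * phi g).
Proof. by rewrite /poly_star linearZ /= (horner_rev Ciu sg) invmxK. Qed.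

Lemma comm_phi_psi p q : phi p * psi q = psi q * phi p.
Proof.
apply: comm_mx_horner; apply: comm_horner_mx.
by rewrite /comm_mx mulmxV // mulVmx.
Qed.

Lemma Prev : Poly (rev g) = rev g :> seq F.
Proof.
apply: (@PolyK _ 0); move: g0; rewrite /nth.
by case: (polyseq g) => [|a s] //=; rewrite rev_cons last_rcons.
Qed.

Lemma revg_n : (Poly (rev g))`_n = g`_0.
Proof.
by rewrite coef_Poly (@nth_rev _ 0 n g) ?sg ?subSS ?subnn.
Qed.

Lemma gs_size : size gs = n.+1.
Proof. by rewrite /poly_star size_scale ?invr_eq0 // Prev size_rev. Qed.

Lemma gs_monic : gs \is monic.
Proof.
apply/monicP; rewrite /poly_star lead_coefZ /lead_coef Prev size_rev sg /=.
by rewrite -Prev revg_n mulVf.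
Qed.

Lemma coprime_ggs : coprimep g gs.
Proof.
have [/eqP g1|g1] := eqVneq (size (gcdp g gs)) 1%N; first by rewrite /coprimep g1.
case: girr => _ irrP.
have eqg := irrP _ g1 (dvdp_gcdl g gs).
have dg : g %| gs by rewrite -(eqp_dvdl _ eqg) dvdp_gcdr.
have := dvdp_size_eqp dg; rewrite sg gs_size eqxx => /esym.
by rewrite eqp_monic ?gs_monic // (negPf gne).
Qed.

Lemma rank_psi p : \rank (psi p) = \rank (phi p).
Proof.
by rewrite psiE rank_unitr // rank_unitl ?unitmx_inv // mxrank_tr.
Qed.

Lemma c0 : c != 0. Proof. by rewrite invr_eq0. Qed.

Lemma rank_gs : \rank (phi gs) = \rank (phi g).
Proof.
rewrite phi_gs mxrank_scale_nz ?c0 //.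
have Cnu : Cf ^+ n \in unitmx by apply: (@unitrX _ Cf n).
by rewrite -[_ * _]/(_ *m _) rank_unitl // rank_psi.
Qed.

Lemma rank_g : (n <= \rank (phi g))%N.
Proof.
have [u [w uw]] := bezout1 coprime_ggs.
have e1 : (phi u * phi g + phi w * phi gs = 1)%R.
  by rewrite -!rmorphM -rmorphD uw rmorph1.
have := mxrank_add (phi u * phi g)%R (phi w * phi gs)%R.
rewrite e1 mxrank1.
move=> h.
have := leq_trans h (leq_add (mxrankM_maxr _ _) (mxrankM_maxr _ _)).
rewrite rank_gs; lia.
Qed.

Lemma phi_g_sing : phi g \notin unitmx.
Proof.
apply/negP => gu.
have : phi gs = 0.
  have e : (phi g * phi gs)%R = 0 by rewrite -rmorphM; exact: phi_f.
  have e2 : phi g *m phi gs = 0 := e.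
  by rewrite -[phi gs](mulKmx gu) e2 mulmx0.
move/(congr1 mxrank); rewrite mxrank0 rank_gs mxrank_unit //.
Qed.

Lemma n_pos : (0 < n)%N.
Proof. by case: girr; rewrite sg. Qed.

Lemma forward M (al : 'M[F]_m.+1) : al ^+ M = Cf ->
  exists h, [/\ h \is monic, irreducible_poly h, h %| g \Po 'X^M & size h = size g].
Proof.
move=> alM.
have PhiG : horner_mx al (g \Po 'X^M) = phi g.
  by rewrite horner_mx_comp rmorphXn /= horner_mx_X alM.
have G0 : g \Po 'X^M != 0.
  apply/eqP => G0; have := rank_g; rewrite -PhiG G0 rmorph0 mxrank0.
  by rewrite leqn0 => /eqP n0; move: n_pos; rewrite n0.
have := phi_g_sing; rewrite -PhiG => Gs.
have [h [hirr hG hsing]] := exists_irred_sing Gs G0.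
have [v v0 vh] : exists2 v : 'rV_m.+1, v != 0 & v *m horner_mx al h = 0.
  by apply/det0P; move: hsing; rewrite unitmxE unitfE negbK.
have h0 := irredp_neq0 hirr.
have comm p q : horner_mx al p *m horner_mx al q = horner_mx al q *m horner_mx al p by apply: phi_comm.
have vg : v *m phi g = 0.
  rewrite -PhiG -(divpK hG) rmorphM /=.
  by rewrite -[_ * _]/(_ *m _) comm mulmxA vh mul0mx.
set d := (size h).-1.
have Kfree := krylov_free hirr v0 vh.
have Kg : krylov al v d *m phi g = 0.
  apply/row_matrixP => i; rewrite row_mul rowK row0.
  rewrite -(horner_mx_X al) -rmorphXn -PhiG -mulmxA comm mulmxA.
  by rewrite PhiG vg mul0mx.
have dn : (d <= n)%N.
  have Kk : (krylov al v d <= kermx (phi g))%MS by apply/sub_kermxP.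
  have := mxrankS Kk; rewrite (eqP Kfree) mxrank_ker.
  move=> h1; have h2 := rank_g; move: (\rank (phi g)) h1 h2 => r h1 h2; clear -h1 h2 hmn; lia.
have nd : (n <= d)%N.
  have sub : (krylov Cf v n <= krylov al v d)%MS.
    apply/row_subP => j; rewrite rowK -alM -exprM.
    have -> : al ^+ (M * j) = horner_mx al 'X^(M * j) by rewrite rmorphXn /= horner_mx_X.
    exact: krylov_span.
  have := krylov_free girr v0 vg; rewrite sg /= => Cfree.
  by have := mxrankS sub; rewrite (eqP Kfree) (eqP Cfree).
have sh : size h = n.+1.
  case: hirr => sh1 _; rewrite -(prednK (ltnW sh1)); congr _.+1; apply/eqP.
  by rewrite eqn_leq dn nd.
have lh0 : lead_coef h != 0 by rewrite lead_coef_eq0.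
exists ((lead_coef h)^-1 *: h); split.
- by apply/monicP; rewrite lead_coefZ mulVf.
- by apply: irred_scale; rewrite ?invr_eq0.
- by rewrite dvdpZl ?invr_eq0.
- by rewrite size_scale ?invr_eq0 // sh sg.
Qed.

Lemma dvd_sub_exp (d a b : {poly F}) k : d %| a - b -> d %| a ^+ k - b ^+ k.
Proof.
move=> dab; elim: k => [|k IH]; first by rewrite subrr dvdp0.
have -> : a ^+ k.+1 - b ^+ k.+1 = a ^+ k * (a - b) + (a ^+ k - b ^+ k) * b.
  by rewrite !exprSr; ring.
by apply: dvdp_add; [exact: dvdp_mull | exact: dvdp_mulr].
Qed.

Lemma phi_congr a b : g * gs %| a - b -> phi a = phi b.
Proof.
move=> /divpK h; apply/eqP; rewrite -subr_eq0 -rmorphB -h rmorphM /=.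
by rewrite [horner_mx Cf (g * gs)]phi_f mulr0.
Qed.

Lemma psi_congr a b : phi a = phi b -> psi a = psi b.
Proof. by rewrite !psiE => ->. Qed.

Lemma phi_X : phi 'X = Cf. Proof. exact: horner_mx_X. Qed.
Lemma psi_X : psi 'X = Ci. Proof. exact: horner_mx_X. Qed.

Lemma phi_mulf a : phi (a * (g * gs)) = 0.
Proof. by rewrite rmorphM /= [horner_mx Cf (g * gs)]phi_f mulr0. Qed.

Lemma backward M p : (0 < M)%N -> g %| p ^+ M - 'X ->
  exists al, in_Sp B al /\ al ^+ M = Cf.
Proof.
move=> M0 gp.
have [u [w uw]] := bezout1 coprime_ggs.
pose e := w * gs.
have e1 : 1 - e = u * g by rewrite -uw addrK.
have fe a : phi (a * (e * (1 - e))) = 0.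
  by rewrite e1 (_ : a * (e * (u * g)) = (a * w * u) * (g * gs)) ?phi_mulf // /e; ring.
have fe' : phi (e * (1 - e)) = 0 by rewrite -[e * _]mul1r fe.
have psie : psi e = phi (1 - e).
  have h1 : psi e * phi e = 0.
    have z : phi g * phi (w * gs) = 0.
      by rewrite -rmorphM (_ : g * (w * gs) = w * (g * gs)); [exact: phi_mulf | ring].
    rewrite /e [psi (w * gs)]rmorphM /= psi_gs -scalerAr -scalerAl -!mulrA z.
    by rewrite !mulr0 scaler0.
  have psig : psi g = c^-1 *: (Ci ^+ n * phi gs).
    rewrite phi_gs -scalerAr scalerA mulVf ?c0 // scale1r mulrA.
    have -> : Ci ^+ n * Cf ^+ n = 1.
      by change Ci with (Cf^-1); rewrite exprVn mulVr // unitrX.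
    by rewrite mul1r.
  have h2 : psi (1 - e) * phi (1 - e) = 0.
    have z : phi gs * phi (u * g) = 0.
      by rewrite -rmorphM (_ : gs * (u * g) = u * (g * gs)); [exact: phi_mulf | ring].
    rewrite e1 [psi (u * g)]rmorphM /= psig -scalerAr -scalerAl -!mulrA z.
    by rewrite !mulr0 scaler0.
  move: h2; rewrite !rmorphB !rmorph1 /= mulrBl mul1r mulrBr mulr1 h1 subr0.
  by move/eqP; rewrite subr_eq0 => /eqP.
pose r := 1 + e * (p - 1).
pose t := 'X * e + (1 - e).
have ge : gs %| e by apply: dvdp_mull (dvdpp gs).
have gug : g %| u * g by apply: dvdp_mull (dvdpp g).
have rt : phi (r ^+ M) = phi t.
  apply: phi_congr; rewrite Gauss_dvdp ?coprime_ggs //; apply/andP; split.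
    have -> : r ^+ M - t = (r ^+ M - p ^+ M) + (p ^+ M - 'X) + ('X - 1) * (u * g).
      by rewrite -e1 /t; ring.
    apply: dvdp_add; [apply: dvdp_add => //|exact: dvdp_mull].
    apply: dvd_sub_exp.
    have -> : r - p = - (p - 1) * (u * g) by rewrite -e1 /r; ring.
    exact: dvdp_mull.
  have -> : r ^+ M - t = (r ^+ M - 1 ^+ M) + (1 - 'X) * e by rewrite expr1n /t; ring.
  apply: dvdp_add; last exact: dvdp_mull.
  apply: dvd_sub_exp.
  have -> : r - 1 = (p - 1) * e by rewrite /r; ring.
  exact: dvdp_mull.
have dfe : g * gs %| e * (1 - e).
  rewrite e1 /e (_ : w * gs * (u * g) = (w * u) * (g * gs)); [exact: dvdp_mull (dvdpp _) | ring].
have CiCf : Ci * Cf = 1 by change Ci with (Cf^-1); rewrite mulVr.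
have CfCi : Cf * Ci = 1 by change Ci with (Cf^-1); rewrite mulrV.
have psi1e : psi (1 - e) = phi e.
  by rewrite rmorphB rmorph1 /= psie rmorphB rmorph1 /= opprB addrC subrK.
have psit : psi t = Ci * phi (1 - e) + phi e.
  by rewrite /t rmorphD rmorphM /= psi_X psie psi1e.
have Cfpsi : phi t = Cf * psi t.
  by rewrite psit mulrDr mulrA CfCi mul1r /t rmorphD rmorphM /= phi_X addrC.
have tu : psi t \in unitmx.
  pose s' := 'X * (1 - e) + e.
  have h : psi t * phi s' = 1.
    have E1 : phi (1 - e) * phi s' = phi ('X * (1 - e)).
      rewrite -rmorphM; apply: phi_congr.
      rewrite (_ : (1 - e) * s' - 'X * (1 - e) = (1 - 'X) * (e * (1 - e))).
        exact: dvdp_mull.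
      by rewrite /s'; ring.
    have E2 : phi e * phi s' = phi e.
      rewrite -rmorphM; apply: phi_congr.
      rewrite (_ : e * s' - e = ('X - 1) * (e * (1 - e))).
        exact: dvdp_mull.
      by rewrite /s'; ring.
    rewrite psit mulrDl -mulrA E1 E2 rmorphM /= phi_X mulrA CiCf mul1r.
    by rewrite -rmorphD subrK rmorph1.
  by have [] := @mulmx1_unit _ _ (psi t) (phi s') h.
pose al1 := phi r.
pose be := psi r.
have beM : be ^+ M = psi t by rewrite /be -rmorphXn; apply: psi_congr.
have al1M : al1 ^+ M = phi t by rewrite /al1 -rmorphXn; exact: rt.
have beu : be \is a GRing.unit by rewrite -(unitrX_pos be M0) beM.
have al1u : al1 \is a GRing.unit.
  rewrite -(unitrX_pos al1 M0) al1M Cfpsi.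
  by have := unitmx_mul Cf (psi t); rewrite hCu tu.
have cab : al1 * be = be * al1 by apply: comm_phi_psi.
have hBe : B *m be = al1^T *m B.
  by rewrite /be psiE !mulmxA mulmxV // mul1mx.
have iBt : (invmx B)^T *m B = - 1%:M.
  have : (invmx B)^T *m B^T = 1%:M by rewrite -trmx_mul mulmxV // trmx1.
  by rewrite hB mulmxN => h; rewrite -h opprK.
have hBt : be^T *m B = B *m al1.
  rewrite /be psiE !trmx_mul trmxK hB -mulmxA -[phi r *m _ *m B]mulmxA iBt.
  by rewrite mulmxN mulmx1 mulNmx mulmxN opprK.
exists (al1 * be^-1); split; [split|].
- have a1 : al1 \in unitmx := al1u.
  have b1 : be \in unitmx := beu.
  by have := unitmx_mul al1 (invmx be); rewrite unitmx_inv a1 b1.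
- change (al1 * be^-1) with (al1 *m invmx be).
  rewrite trmx_mul -(mulmxA _ al1^T B) -hBe.
  have -> : (invmx be)^T *m (B *m be) *m (al1 *m invmx be) = (invmx be)^T *m B *m al1.
    rewrite -!mulmxA [be *m (al1 *m _)]mulmxA.
    have -> : be *m al1 = al1 *m be by rewrite -[_ *m _]/(_ * _) -cab.
    by rewrite -mulmxA mulmxV // mulmx1.
  by rewrite -mulmxA -hBt mulmxA -trmx_mul mulmxV // trmx1 mul1mx.
- rewrite exprMn_comm; last exact: commrV cab.
  by rewrite exprVn beM al1M Cfpsi mulrK.
Qed.

End Main.

Unset Implicit Arguments. Set Strict Implicit. Set Printing Implicit Defensive.

Theorem corollary4p19 (F : finFieldType) (M n : nat) (g : {poly F})
    (B : 'M[F]_(n + n)) (Cf : 'M[F]_(n + n)) :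
  (2 <= M)%N ->
  g \is monic -> irreducible_poly g -> size g = n.+1 ->
  g.[0] != 0 -> g != poly_star g ->
  nondeg_alternating B ->
  in_Sp B Cf -> char_poly Cf = g * poly_star g ->
  (exists alpha : 'M[F]_(n + n), in_Sp B alpha /\ alpha ^+ M = Cf)
  <-> M_power_poly M g.
Proof.
move=> M2 gmon girr sg g0' gne [hBt [_ hBu]] [hCu hSp] hchar.
have g0 : g`_0 != 0 by rewrite -horner_coef0.
have gX : g != 'X by apply: contraNneq g0 => ->; rewrite coefX.
have M0 : (0 < M)%N by apply: leq_trans M2.
move: B Cf sg hBt hBu hCu hSp hchar.
case: n => [|n'] B Cf sg hBt hBu hCu hSp hchar.
  by case: girr; rewrite sg.
split.
- move=> [al [_ alM]].
  split => //.
  exact: (@forward F (n' + n'.+1) n'.+1 g B Cf (erefl _) hBu hCu hSp sg g0 gmon girr gne hchar M al alM).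
- move=> [_ _ _ [h [hmon hirr hG sh]]].
  rewrite sg in sh.
  have [A hA] : exists A : 'M[F]_(n'.+1), horner_mx A h = 0.
    have := companionmxK hmon; move: (companionmx h); rewrite sh /= => A hA.
    by exists A; rewrite -[in X in horner_mx _ X]hA Cayley_Hamilton.
  have [p gp] := root_from_h hirr sh girr sg hG hA.
  exact: (@backward F (n' + n'.+1) n'.+1 g B Cf hBt hBu hCu hSp sg g0 gmon girr gne hchar M p M0 gp).
Qed.
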